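(* For every $n\in\mathbb N$ there is an isomorphism of $\Bbbk\mathfrak S_n\otimes\Bbbk\mathbf{FA}^{\mathrm{op}}$-modules $$\hom_{\Bbbk\mathbf{FA}}(\overline P^{\otimes n},P^{\mathbf{FA}}_{\bullet})\;\cong\;\Bbbk\mathbf{FS}(\bullet,\mathbf n).$$ More precisely, the map $$\hom_{\Bbbk\mathbf{FA}}(P^{\mathbf{FA}}_{\mathbf n},P^{\mathbf{FA}}_{\mathbf t})\longrightarrow \hom_{\Bbbk\mathbf{FA}}(\overline P^{\otimes n},P^{\mathbf{FA}}_{\mathbf t})$$ given by restriction along the inclusion $\overline P^{\otimes n}\hookrightarrow P^{\mathbf{FA}}_{\mathbf n}$ is identified, via the Yoneda isomorphism $\hom_{\Bbbk\mathbf{FA}}(P^{\mathbf{FA}}_{\mathbf n},P^{\mathbf{FA}}_{\mathbf t})\cong\Bbbk\mathbf{FA}(\mathbf t,\mathbf n)$, with the surjection $\Bbbk\mathbf{FA}(\mathbf t,\mathbf n)\twoheadrightarrow\Bbbk\mathbf{FS}(\mathbf t,\mathbf n)$ that sends each surjective map to itself and each non-surjective map to $0$; this identification is natural in $\mathbf t\in\mathbf{FA}^{\mathrm{op}}$ and $\mathfrak S_n$-equivariant.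
   Context: Let $\Bbbk$ be a field. $\mathbf{FA}$ denotes the category of finite sets and all maps, and $\mathbf{FI}$, $\mathbf{FS}$, $\mathbf{FB}$ its wide subcategories of injections, surjections and bijections respectively; $\mathbf n=\{1,\dots,n\}$ for $n\in\mathbb N$ ($\mathbf 0=\emptyset$), and $\mathfrak S_n$ is the symmetric group. For a category $\mathcal C$, $\Bbbk\mathcal C(X,Y)$ is the $\Bbbk$-vector space with basis $\mathcal C(X,Y)$. A $\Bbbk\mathbf{FA}$-module is a functor from $\mathbf{FA}$ to $\Bbbk$-vector spaces (these form the abelian category $\mathcal F(\mathbf{FA})$); $\otimes$ denotes the pointwise tensor product over $\Bbbk$, and $\hom_{\Bbbk\mathbf{FA}}$ denotes natural transformations. $P^{\mathbf{FA}}_{\mathbf n}:=\Bbbk\mathbf{FA}(\mathbf n,-)$, so $P^{\mathbf{FA}}_{\mathbf n}(X)\cong\Bbbk[X]^{\otimes n}$ (where $\Bbbk[X]$ has basis $\{[x]:x\in X\}$), with the right $\mathfrak S_n$-action by precomposition, equivalently place permutation of tensor factors; write $P^{\mathbf{FA}}:=P^{\mathbf{FA}}_{\mathbf 1}$. Let $\overline{\Bbbk}$ be the functor with value $\Bbbk$ on non-empty sets (all maps acting by the identity) and $0$ on $\emptyset$, and $\Bbbk_{\mathbf 0}$ the functor with value $\Bbbk$ on $\emptyset$ and $0$ on non-empty sets. $\overline P$ is the kernel of the surjection $P^{\mathbf{FA}}\to\overline\Bbbk$, $[x]\mapsto 1$; thus $\overline P(X)=\{\sum_x a_x[x]:\sum_x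 a_x=0\}$. For $n\ge1$, $\overline P^{\otimes n}$ is the $n$-fold pointwise tensor power, a subfunctor of $P^{\mathbf{FA}}_{\mathbf n}$ stable under the place-permutation right action of $\mathfrak S_n$; by convention $\overline P^{\otimes 0}:=\overline\Bbbk$. $\Bbbk\mathbf{FS}(-,\mathbf n)$ is regarded as a $\Bbbk\mathbf{FA}^{\mathrm{op}}$-module (contravariant functor on $\mathbf{FA}$) as the quotient of $\Bbbk\mathbf{FA}(-,\mathbf n)$ by the span of non-surjective maps: for $h:Y\to X$ and a surjection $g:X\to\mathbf n$, $[g]\cdot h=[g\circ h]$ if $g\circ h$ is surjective and $0$ otherwise; $\mathfrak S_n$ acts by postcomposition. *)

(* Defs.v *)
(* Concrete model of kFA-modules restricted to the skeleton
   {'I_m : m in nat} of FA (finite sets 'I_m = {0,..,m-1}). *)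
From HB Require Import structures.
From mathcomp Require Import all_boot all_order all_algebra all_fingroup.
Set Implicit Arguments. Unset Strict Implicit. Unset Printing Implicit Defensive.
Import GRing.Theory.
Local Open Scope ring_scope.

Notation PFA K n m := {ffun {ffun 'I_n -> 'I_m} -> K}.

Section Defs.
Variable K : fieldType.

(* P^{FA}_n ('I_m) = k FA(n, m) = k['I_m]^{(x) n}: coefficient vectors on the
   basis of maps g : 'I_n -> 'I_m  ([g] <-> [g 1] (x) ... (x) [g n]). *)

Definition Pmap (n m p : nat) (f : 'I_m -> 'I_p) (v : PFA K n m) : PFA K n p :=
  [ffun g' : {ffun 'I_n -> 'I_p} =>
     \sum_(g : {ffun 'I_n -> 'I_m} | [ffun i => f (g i)] == g') v g].

(* contravariant action of h : 'I_s -> 'I_t : P_t -> P_s, [g] |-> [g o h]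
   (for s = t = n and h a permutation this is the right S_n-action,
    i.e. place permutation of tensor factors). *)
Definition Pre (s t m : nat) (h : 'I_s -> 'I_t) (v : PFA K t m) : PFA K s m :=
  [ffun g' : {ffun 'I_s -> 'I_m} =>
     \sum_(g : {ffun 'I_t -> 'I_m} | [ffun i => g (h i)] == g') v g].

Definition ptens (n m : nat) (u : 'I_n -> {ffun 'I_m -> K}) : PFA K n m :=
  [ffun g : {ffun 'I_n -> 'I_m} => \prod_(i < n) u i (g i)].

(* v lies in Pbar^{(x) n}('I_m): for n >= 1, v is in the span of the pure
   tensors of elements of Pbar('I_m) = {sum_x a_x [x] | sum_x a_x = 0};
   for n = 0, Pbar^{(x) 0} = kbar (k on non-empty sets, 0 on the empty set). *)
Definition Pbar_tens (n m : nat) (v : PFA K n m) : Prop :=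
  if n is 0 then (0 < m)%N \/ v = 0
  else exists (N : nat) (u : 'I_N -> 'I_n -> {ffun 'I_m -> K}),
      (forall j i, \sum_(x < m) u j i x = 0) /\ v = \sum_(j < N) ptens (u j).

Definition is_hom (n t : nat) (alpha : forall m, PFA K n m -> PFA K t m) : Prop :=
  (forall m (c : K) (v w : PFA K n m), Pbar_tens v -> Pbar_tens w ->
      alpha m [ffun g => c * v g + w g] =
        [ffun g' => c * alpha m v g' + alpha m w g']) /\
  (forall m p (f : 'I_m -> 'I_p) (v : PFA K n m), Pbar_tens v ->
      alpha p (Pmap f v) = Pmap f (alpha m v)).

Definition hom_eq (n t : nat) (alpha beta : forall m, PFA K n m -> PFA K t m) : Prop :=
  forall m (v : PFA K n m), Pbar_tens v -> alpha m v = beta m v.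

(* Yoneda: a = sum_phi a_phi [phi] in kFA('I_t,'I_n) = P_t('I_n) gives the
   natural transformation P_n -> P_t, [g] |-> sum_phi a_phi [g o phi];
   Yon a restricted to Pbar^{(x) n} is the restriction map of the statement. *)
Definition Yon (n t : nat) (a : PFA K t n) (m : nat) (v : PFA K n m) : PFA K t m :=
  [ffun psi : {ffun 'I_t -> 'I_m} =>
     \sum_(g : {ffun 'I_n -> 'I_m})
       \sum_(phi : {ffun 'I_t -> 'I_n} | [ffun i => g (phi i)] == psi)
          v g * a phi].

Definition surjf (t n : nat) (phi : {ffun 'I_t -> 'I_n}) : bool :=
  [forall j : 'I_n, exists i : 'I_t, phi i == j].

(* kFS('I_t,'I_n) is modelled as the elements of kFA('I_t,'I_n) supported on
   surjections; projS is the surjection kFA -> kFS (non-surjections |-> 0). *)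
Definition projS (t n : nat) (a : PFA K t n) : PFA K t n :=
  [ffun phi => if surjf phi then a phi else 0].

Definition FSact (s t n : nat) (h : 'I_s -> 'I_t) (b : PFA K t n) : PFA K s n :=
  projS (Pre h b).

End Defs.

(* Main.v *)
Require Import Defs.
From HB Require Import structures.
From mathcomp Require Import all_boot all_order all_algebra all_fingroup.
Import GRing.Theory.
Local Open Scope ring_scope.

Section Work.
Set Implicit Arguments.
Unset Strict Implicit.
Variable K : fieldType.

Lemma fiberP (I J : finType) (p : I -> J) (P : pred J) (F : I -> J -> K) :
  \sum_(j | P j) \sum_(i | p i == j) F i j = \sum_(i | P (p i)) F i (p i).
Proof.
rewrite (exchange_big_dep (fun i => P (p i))) /=; last by move=> j i Pj /eqP->.
apply: eq_bigr => i Pi; rewrite (big_pred1 (p i)) // => j /=.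
by case: (eqVneq j (p i)) => [->|ne] /=; rewrite ?Pi ?andbF.
Qed.

Lemma fiber (I J : finType) (p : I -> J) (F : I -> J -> K) :
  \sum_j \sum_(i | p i == j) F i j = \sum_i F i (p i).
Proof. exact: (fiberP p xpredT). Qed.

Lemma Yon_nat n t (a : PFA K t n) m p (f : 'I_m -> 'I_p) (v : PFA K n m) :
  Yon a (Pmap f v) = Pmap f (Yon a v).
Proof.
apply/ffunP => psi'; rewrite /Yon /Pmap !ffunE.
transitivity (\sum_(g' : {ffun 'I_n -> 'I_p}) \sum_(g : {ffun 'I_n -> 'I_m} | [ffun i => f (g i)] == g')
   \sum_(phi : {ffun 'I_t -> 'I_n} | [ffun i => g' (phi i)] == psi') v g * a phi).
  apply: eq_bigr => g' _; rewrite exchange_big /=; apply: eq_bigr => phi _.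
  by rewrite ffunE mulr_suml.
rewrite (fiber (fun g : {ffun 'I_n -> 'I_m} => [ffun i => f (g i)])
   (fun (g : {ffun 'I_n -> 'I_m}) (g' : {ffun 'I_n -> 'I_p}) => \sum_(phi : {ffun 'I_t -> 'I_n} | [ffun i => g' (phi i)] == psi') v g * a phi)) /=.
under [RHS]eq_bigr => psi _ do rewrite ffunE.
rewrite [RHS]exchange_big /=.
apply: eq_bigr => g _.
rewrite (fiberP (fun phi : {ffun 'I_t -> 'I_n} => [ffun i => g (phi i)]) (fun psi : {ffun 'I_t -> 'I_m} => [ffun i => f (psi i)] == psi')
   (fun phi psi => v g * a phi)) /=.
apply: eq_bigl => phi; congr (_ == _); apply/ffunP => i; rewrite !ffunE //.
Qed.


Lemma Yon_lin n t (a : PFA K t n) m (c : K) (v w : PFA K n m) :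
  Yon a [ffun g => c * v g + w g] = [ffun g' => c * Yon a v g' + Yon a w g'].
Proof.
apply/ffunP => psi; rewrite /Yon !ffunE mulr_sumr -big_split; apply: eq_bigr => g _.
rewrite mulr_sumr -big_split; apply: eq_bigr => phi _.
by rewrite ffunE mulrDl mulrA.
Qed.

Lemma Pre_Yon n t s (h : 'I_s -> 'I_t) (a : PFA K t n) m (v : PFA K n m) :
  Pre h (Yon a v) = Yon (Pre h a) v.
Proof.
apply/ffunP => psi'; rewrite /Yon /Pre !ffunE.
under eq_bigr => psi _ do rewrite ffunE.
rewrite exchange_big /=; apply: eq_bigr => g _.
rewrite (fiberP (fun phi : {ffun 'I_t -> 'I_n} => [ffun i => g (phi i)])
   (fun psi : {ffun 'I_t -> 'I_m} => [ffun i => psi (h i)] == psi')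
   (fun phi psi => v g * a phi)) /=.
under [RHS]eq_bigr => phi' _ do rewrite ffunE mulr_sumr.
rewrite (fiberP (fun phi : {ffun 'I_t -> 'I_n} => [ffun i => phi (h i)])
   (fun phi' : {ffun 'I_s -> 'I_n} => [ffun i => g (phi' i)] == psi')
   (fun phi phi' => v g * a phi)) /=.
apply: eq_bigl => phi; congr (_ == _); apply/ffunP => i; rewrite !ffunE //.
Qed.

Lemma Yon_Pre n t (sigma : 'I_n -> 'I_n) (a : PFA K t n) m (v : PFA K n m) :
  Yon a (Pre sigma v) = Yon (Pmap sigma a) v.
Proof.
apply/ffunP => psi; rewrite /Yon /Pre /Pmap !ffunE.
transitivity (\sum_(g' : {ffun 'I_n -> 'I_m}) \sum_(g : {ffun 'I_n -> 'I_m} | [ffun i => g (sigma i)] == g')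
   \sum_(phi : {ffun 'I_t -> 'I_n} | [ffun i => g' (phi i)] == psi) v g * a phi).
  apply: eq_bigr => g' _; rewrite exchange_big /=; apply: eq_bigr => phi _.
  by rewrite ffunE mulr_suml.
rewrite (fiber (fun g : {ffun 'I_n -> 'I_m} => [ffun i => g (sigma i)])
   (fun (g : {ffun 'I_n -> 'I_m}) (g' : {ffun 'I_n -> 'I_m}) =>
     \sum_(phi : {ffun 'I_t -> 'I_n} | [ffun i => g' (phi i)] == psi) v g * a phi)) /=.
apply: eq_bigr => g _.
under [RHS]eq_bigr => phi' _ do rewrite ffunE mulr_sumr.
rewrite (fiberP (fun phi : {ffun 'I_t -> 'I_n} => [ffun i => sigma (phi i)])
   (fun phi' : {ffun 'I_t -> 'I_n} => [ffun i => g (phi' i)] == psi)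
   (fun phi phi' => v g * a phi)) /=.
apply: eq_bigl => phi; congr (_ == _); apply/ffunP => i; rewrite !ffunE //.
Qed.


Lemma surjf_pre s t n (h : 'I_s -> 'I_t) (phi : {ffun 'I_t -> 'I_n}) :
  surjf [ffun i => phi (h i)] -> surjf phi.
Proof.
move/forallP=> H; apply/forallP=> j; case/existsP: (H j) => i.
by rewrite ffunE => Hi; apply/existsP; exists (h i).
Qed.

Lemma surjf_perm t n (sigma : 'S_n) (phi : {ffun 'I_t -> 'I_n}) :
  surjf [ffun i => sigma (phi i)] = surjf phi.
Proof.
apply/forallP/forallP => H j.
  case/existsP: (H (sigma j)) => i; rewrite ffunE (inj_eq (@perm_inj _ sigma)) => Hi.
  by apply/existsP; exists i.
case/existsP: (H ((sigma^-1)%g j)) => i /eqP E; apply/existsP; exists i.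
by rewrite ffunE E permKV.
Qed.

Lemma projS_Pre s t n (h : 'I_s -> 'I_t) (a : PFA K t n) :
  projS (Pre h a) = FSact h (projS a).
Proof.
apply/ffunP => phi'; rewrite /FSact /projS !ffunE; case: ifP => // sp.
apply: eq_bigr => phi /eqP E; rewrite ffunE.
by rewrite -E in sp; rewrite (surjf_pre sp).
Qed.

Lemma projS_Pmap t n (sigma : 'S_n) (a : PFA K t n) :
  projS (Pmap sigma a) = Pmap sigma (projS a).
Proof.
apply/ffunP => phi'; rewrite /projS /Pmap !ffunE; case: ifP => sp.
  by apply: eq_bigr => phi /eqP E; rewrite ffunE -(surjf_perm sigma) E sp.
by rewrite big1 // => phi /eqP E; rewrite ffunE -(surjf_perm sigma) E sp.
Qed.


Lemma subfE (A : finType) (f g : {ffun A -> K}) x : (f - g) x = f x - g x.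
Proof. by rewrite !ffunE. Qed.

Definition delta m (a : 'I_m) : {ffun 'I_m -> K} := [ffun x => (x == a)%:R].
Definition push m p (f : 'I_m -> 'I_p) (u : {ffun 'I_m -> K}) : {ffun 'I_p -> K} :=
  [ffun y => \sum_(x | f x == y) u x].
Definition sc (n m : nat) (c : K) (v : PFA K n m) : PFA K n m := [ffun g => c * v g].

Lemma eq_ptens n m (u u' : 'I_n -> {ffun 'I_m -> K}) :
  (forall i, u i = u' i) -> ptens u = ptens u'.
Proof. by move=> H; apply/ffunP => g; rewrite !ffunE; apply: eq_bigr => i _; rewrite H. Qed.

Lemma Pmap_ptens n m p (f : 'I_m -> 'I_p) (u : 'I_n -> {ffun 'I_m -> K}) :
  Pmap f (ptens u) = ptens (fun i => push f (u i)).
Proof.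
apply/ffunP => g'; rewrite /Pmap /ptens !ffunE.
under [RHS]eq_bigr => i _ do rewrite ffunE big_mkcond.
rewrite (bigA_distr_bigA (fun i (y : 'I_m) => if f y == g' i then u i y else 0)) /=.
rewrite [LHS]big_mkcond; apply: eq_bigr => g _.
case: ifP => [/eqP <- | ne].
  by rewrite ffunE; apply: eq_bigr => i _; rewrite ffunE eqxx.
have [i Hi] : exists i, f (g i) != g' i.
  apply/existsP; apply: contraFT ne; rewrite negb_exists => /forallP H.
  by apply/eqP/ffunP => i; rewrite ffunE; apply/eqP; move: (H i); rewrite negbK.
by rewrite (bigD1 i) //= (negbTE Hi) mul0r.
Qed.

Lemma push_delta m p (f : 'I_m -> 'I_p) (a : 'I_m) : push f (delta a) = delta (f a).
Proof.
apply/ffunP => y; rewrite !ffunE big_mkcond (bigD1 a) //= !ffunE eqxx big1 ?addr0.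
  by rewrite eq_sym; case: ifP.
by move=> x ne; rewrite ffunE (negbTE ne); case: ifP.
Qed.

Lemma push_sub m p (f : 'I_m -> 'I_p) (u w : {ffun 'I_m -> K}) :
  push f (u - w) = push f u - push f w.
Proof. by apply/ffunP => y; rewrite !ffunE -sumrB; apply: eq_bigr => x _; rewrite !ffunE. Qed.

Lemma push_sum m p (f : 'I_m -> 'I_p) (u : {ffun 'I_m -> K}) :
  \sum_y push f u y = \sum_x u x.
Proof.
under eq_bigr => y _ do rewrite ffunE.
exact: (fiber f (fun x y => u x)).
Qed.

Lemma sum_delta m (a : 'I_m) : \sum_x delta a x = 1.
Proof.
rewrite (bigD1 a) //= ffunE eqxx big1 ?addr0 // => x ne.
by rewrite ffunE (negbTE ne).
Qed.

Lemma sum_delta_sub m (a b : 'I_m) : \sum_x (delta a - delta b) x = 0.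
Proof.
rewrite (eq_bigr (fun x : 'I_m => delta a x - delta b x)) => [|x _]; last by rewrite !ffunE.
rewrite (@sumrB _ _ _ _ (fun x => delta a x) (fun x => delta b x)).
by rewrite !sum_delta subrr.
Qed.

Lemma Pmap_sum n m p (f : 'I_m -> 'I_p) (I : Type) (r : seq I) (V : I -> PFA K n m) :
  Pmap f (\sum_(k <- r) V k) = \sum_(k <- r) Pmap f (V k).
Proof.
apply/ffunP => g'; rewrite !ffunE sum_ffunE.
under eq_bigr => g _ do rewrite sum_ffunE.
rewrite exchange_big; apply: eq_bigr => k _; rewrite ffunE //.
Qed.

Lemma Pmap_sc n m p (f : 'I_m -> 'I_p) c (v : PFA K n m) :
  Pmap f (sc c v) = sc c (Pmap f v).
Proof.
apply/ffunP => g'; rewrite !ffunE mulr_sumr; apply: eq_bigr => g _; rewrite ffunE //.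
Qed.

Lemma ptens_expand n M (U : 'I_n -> {ffun 'I_M -> K}) (b : 'I_M) :
  (forall i, \sum_x U i x = 0) ->
  ptens U = \sum_(x : {ffun 'I_n -> 'I_M})
              sc (\prod_i U i (x i)) (ptens (fun i => delta (x i) - delta b)).
Proof.
move=> HU; apply/ffunP => g; rewrite sum_ffunE !ffunE.
under [RHS]eq_bigr => x _ do rewrite !ffunE -big_split /=.
rewrite -(bigA_distr_bigA (fun i (y : 'I_M) => U i y * (delta y - delta b) (g i))) /=.
apply: eq_bigr => i _.
under eq_bigr => y _ do rewrite !ffunE mulrBr.
rewrite sumrB -mulr_suml HU mul0r subr0.
rewrite (bigD1 (g i)) //= eqxx mulr1 big1 ?addr0 // => y ne.
by rewrite eq_sym (negbTE ne) mulr0.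
Qed.


Lemma Pbar_tens0 n m : Pbar_tens (0 : PFA K n m).
Proof.
case: n => [|n] /=; first by right.
exists 0%N, (fun _ _ => 0); split; first by move=> [].
by rewrite big_ord0.
Qed.

Lemma Pbar_ptens n m (u : 'I_n -> {ffun 'I_m -> K}) :
  (0 < m)%N -> (forall i, \sum_x u i x = 0) -> Pbar_tens (ptens u).
Proof.
case: n u => [|n] u Hm Hu /=; first by left.
by exists 1%N, (fun _ => u); split => //; rewrite big_ord1.
Qed.

Definition scl n m (c : K) (u : 'I_n.+1 -> {ffun 'I_m -> K}) : 'I_n.+1 -> {ffun 'I_m -> K} :=
  fun i => if i == ord0 then [ffun x => c * u i x] else u i.

Lemma ptens_scl n m c (u : 'I_n.+1 -> {ffun 'I_m -> K}) : ptens (scl c u) = sc c (ptens u).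
Proof.
apply/ffunP => g; rewrite !ffunE (bigD1 ord0) //= [in RHS](bigD1 ord0) //=.
rewrite /scl eqxx ffunE -mulrA; congr (_ * (_ * _)).
by apply: eq_bigr => i /negbTE ->.
Qed.

Lemma Pbar_lc n m c (v w : PFA K n m) :
  Pbar_tens v -> Pbar_tens w -> Pbar_tens (sc c v + w).
Proof.
case: n v w => [|n] v w /=.
  case=> [Hm|->]; first by left.
  case=> [Hm|->]; first by left.
  by right; apply/ffunP => g; rewrite !ffunE mulr0 addr0.
move=> [N1 [u1 [H1 ->]]] [N2 [u2 [H2 ->]]].
exists (N1 + N2)%N, (fun j => match split j with inl j1 => scl c (u1 j1) | inr j2 => u2 j2 end).
split.
  move=> j i; case: (split j) => [j1|j2]; last exact: H2.
  rewrite /scl; case: ifP => _; last exact: H1.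
  under eq_bigr do rewrite ffunE.
  by rewrite -mulr_sumr H1 mulr0.
rewrite big_split_ord /=; congr (_ + _).
  rewrite [RHS](eq_bigr (fun j => sc c (ptens (u1 j)))); last first.
    move=> j _; have -> : split (lshift N2 j) = inl j by exact: (unsplitK (inl j)).
    by rewrite ptens_scl.
  apply/ffunP => g; rewrite ffunE !sum_ffunE mulr_sumr.
  by apply: eq_bigr => j _; rewrite [RHS]ffunE.
apply: eq_bigr => j _.
by have -> : split (rshift N1 j) = inr j by exact: (unsplitK (inr j)).
Qed.

Lemma sc1 n m (v : PFA K n m) : sc 1 v = v.
Proof. by apply/ffunP => g; rewrite ffunE mul1r. Qed.

Lemma Pbar_add n m (v w : PFA K n m) :
  Pbar_tens v -> Pbar_tens w -> Pbar_tens (v + w).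
Proof. by move=> Hv Hw; rewrite -[v]sc1; apply: Pbar_lc. Qed.

Lemma Pbar_sc n m c (v : PFA K n m) : Pbar_tens v -> Pbar_tens (sc c v).
Proof. by move=> Hv; rewrite -[sc c v]addr0; apply: Pbar_lc => //; apply: Pbar_tens0. Qed.

Lemma Pbar_sum n m (I : Type) (r : seq I) (V : I -> PFA K n m) :
  (forall k, Pbar_tens (V k)) -> Pbar_tens (\sum_(k <- r) V k).
Proof.
move=> HV; elim: r => [|x r IH]; first by rewrite big_nil; apply: Pbar_tens0.
by rewrite big_cons; apply: Pbar_add.
Qed.

Section Hom.
Variables (n t : nat) (gamma : forall m, PFA K n m -> PFA K t m).
Hypothesis Hg : is_hom gamma.

Lemma hom_lc m c (v w : PFA K n m) : Pbar_tens v -> Pbar_tens w ->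
  gamma (sc c v + w) = sc c (gamma v) + gamma w.
Proof.
move=> Hv Hw; have -> : sc c v + w = [ffun g => c * v g + w g].
  by apply/ffunP => g; rewrite !ffunE.
by rewrite (proj1 Hg) //; apply/ffunP => g; rewrite !ffunE.
Qed.

Lemma hom0 m : gamma (0 : PFA K n m) = 0.
Proof.
have H := hom_lc 1 (@Pbar_tens0 n m) (@Pbar_tens0 n m).
rewrite sc1 addr0 sc1 in H.
have : gamma (0 : PFA K n m) + gamma (0 : PFA K n m) - gamma (0 : PFA K n m) = gamma (0 : PFA K n m) - gamma (0 : PFA K n m) by rewrite -H.
by rewrite addrK subrr.
Qed.

Lemma hom_sc m c (v : PFA K n m) : Pbar_tens v -> gamma (sc c v) = sc c (gamma v).
Proof.
move=> Hv; rewrite -[sc c v]addr0 hom_lc //; last exact: Pbar_tens0.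
by rewrite hom0 addr0.
Qed.

Lemma hom_sum m (I : Type) (r : seq I) (V : I -> PFA K n m) :
  (forall k, Pbar_tens (V k)) -> gamma (\sum_(k <- r) V k) = \sum_(k <- r) gamma (V k).
Proof.
move=> HV; elim: r => [|x r IH]; first by rewrite !big_nil hom0.
rewrite !big_cons -[V x]sc1 hom_lc ?sc1 ?IH //; exact: Pbar_sum.
Qed.

Lemma hom_nat m p (f : 'I_m -> 'I_p) (v : PFA K n m) :
  Pbar_tens v -> gamma (Pmap f v) = Pmap f (gamma v).
Proof. exact: (proj2 Hg). Qed.

End Hom.

Lemma Pmap_sub n m p (f : 'I_m -> 'I_p) (v w : PFA K n m) :
  Pmap f (v - w) = Pmap f v - Pmap f w.
Proof. by apply/ffunP => g; rewrite !ffunE -sumrB; apply: eq_bigr => x _; rewrite !ffunE. Qed.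

Lemma is_hom_sub n t (alpha beta : forall m, PFA K n m -> PFA K t m) :
  is_hom alpha -> is_hom beta -> is_hom (fun m v => alpha m v - beta m v).
Proof.
move=> [Ha Na] [Hb Nb]; split.
  move=> m c v w Hv Hw; rewrite Ha // Hb //; apply/ffunP => g; rewrite !ffunE.
  by rewrite mulrBr addrACA -opprD.
by move=> m p f v Hv; rewrite Na // Nb // Pmap_sub.
Qed.

Lemma is_hom_Yon n t (a : PFA K t n) : is_hom (Yon a).
Proof. by split => *; [apply: Yon_lin | apply: Yon_nat]. Qed.


Definition wid n (i : 'I_n) : 'I_n.+1 := widen_ord (leqnSn n) i.
Definition EE n : PFA K n n.+1 := ptens (fun i => delta (wid i) - delta ord_max).
Definition iota t n (phi : {ffun 'I_t -> 'I_n}) : {ffun 'I_t -> 'I_n.+1} :=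
  [ffun k => wid (phi k)].
Definition fx n M (x : {ffun 'I_n -> 'I_M.+1}) (k : 'I_n.+1) : 'I_M.+1 :=
  match (insub (val k) : option 'I_n) with Some i => x i | None => ord_max end.

Lemma wid_max n (i : 'I_n) : (wid i == ord_max) = false.
Proof. by apply/negbTE; rewrite -val_eqE /= neq_ltn ltn_ord. Qed.

Lemma wid_inj n : injective (@wid n).
Proof. by move=> x y /(congr1 val) /= H; apply: val_inj. Qed.

Lemma Pbar_E n : Pbar_tens (EE n).
Proof. by apply: Pbar_ptens => // i; apply: sum_delta_sub. Qed.

Lemma fx_wid n M (x : {ffun 'I_n -> 'I_M.+1}) i : fx x (wid i) = x i.
Proof.
rewrite /fx; case: insubP => [i' _ Hv|]; last by rewrite /= ltn_ord.
by congr (x _); apply: val_inj; rewrite Hv.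
Qed.

Lemma fx_max n M (x : {ffun 'I_n -> 'I_M.+1}) : fx x ord_max = ord_max.
Proof. by rewrite /fx; case: insubP => [i' Hlt _|//]; rewrite /= ltnn in Hlt. Qed.

Lemma Pmap_fx n M (x : {ffun 'I_n -> 'I_M.+1}) :
  Pmap (fx x) (EE n) = ptens (fun i => delta (x i) - delta ord_max).
Proof.
rewrite /EE Pmap_ptens; apply: eq_ptens => i.
by rewrite push_sub !push_delta fx_wid fx_max.
Qed.

Lemma Yon_E_iota n t (a : PFA K t n) (phi : {ffun 'I_t -> 'I_n}) :
  surjf phi -> Yon a (EE n) (iota phi) = a phi.
Proof.
move=> sp; rewrite /Yon ffunE.
pose g0 : {ffun 'I_n -> 'I_n.+1} := [ffun i => wid i].
rewrite (bigD1 g0) //= [X in _ + X]big1 ?addr0.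
  rewrite (big_pred1 phi) => [|phi'].
    rewrite /EE ffunE big1 ?mul1r // => i _.
    by rewrite !ffunE eqxx wid_max subr0.
  apply/eqP/eqP => [H|->]; apply/ffunP => k; last by rewrite !ffunE.
  by move/ffunP: H => /(_ k); rewrite !ffunE => /wid_inj.
move=> g ne; apply: big1 => phi' /eqP H.
have [l [H1 H2]] : exists l, g l != wid l /\ g l != ord_max.
  have [i Hi] : exists i, g i != wid i.
    apply/existsP; apply: contraR ne; rewrite negb_exists => /forallP Hg.
    by apply/eqP/ffunP => i; rewrite ffunE; apply/eqP; move: (Hg i); rewrite negbK.
  case: (eqVneq (g i) ord_max) => Hmax; last by exists i.
  move/forallP: sp => /(_ i) /existsP [k /eqP Hk].
  have Hgk : g (phi' k) = wid i by move/ffunP: H => /(_ k); rewrite !ffunE Hk.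
  exists (phi' k); split; last by rewrite Hgk wid_max.
  rewrite Hgk; apply/negP => /eqP /wid_inj Heq.
  by move: Hgk; rewrite -Heq Hmax => /eqP; rewrite eq_sym wid_max.
by rewrite /EE ffunE (bigD1 l) //= !ffunE (negbTE H1) (negbTE H2) subrr mul0r mul0r.
Qed.

Lemma decomp n m (v : PFA K n m) : Pbar_tens v ->
  exists N (c : 'I_N -> K) (U : 'I_N -> 'I_n -> {ffun 'I_m.+1 -> K}),
    (forall j i, \sum_x U j i x = 0) /\
    Pmap (widen_ord (leqnSn m)) v = \sum_(j < N) sc (c j) (ptens (U j)).
Proof.
case: n v => [|n] v /= Hv.
  exists 1%N, (fun _ => \sum_g v g), (fun _ _ => 0); split; first by move=> ? [].
  rewrite big_ord1; apply/ffunP => g'; rewrite !ffunE big_ord0 mulr1.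
  by apply: eq_bigl => g; apply/eqP/ffunP => -[].
case: Hv => N [u [Hu ->]].
exists N, (fun _ => 1), (fun j i => push (widen_ord (leqnSn m)) (u j i)); split.
  by move=> j i; rewrite push_sum Hu.
by rewrite Pmap_sum; apply: eq_bigr => j _; rewrite sc1 Pmap_ptens.
Qed.

Section Vanish.
Variables (n t : nat) (gamma : forall m, PFA K n m -> PFA K t m).
Hypothesis Hg : is_hom gamma.
Hypothesis Hs : forall phi : {ffun 'I_t -> 'I_n}, surjf phi -> gamma (EE n) (iota phi) = 0.

Lemma vanish_W (psi : {ffun 'I_t -> 'I_n.+1}) :
  (forall k, psi k != ord_max) -> gamma (EE n) psi = 0.
Proof.
move=> Hpsi.
case: (boolP [exists j : 'I_n, [forall k, psi k != wid j]]) => [/existsP [j /forallP Hj] | Hall].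
  pose r := fun x : 'I_n.+1 => if x == wid j then ord_max else x.
  have HE : Pmap r (EE n) = 0.
    rewrite /EE Pmap_ptens; apply/ffunP => g; rewrite !ffunE (bigD1 j) //= push_sub !push_delta.
    by rewrite /r eqxx; case: ifP => _; rewrite subrr ffunE mul0r.
  have H0 : Pmap r (gamma (EE n)) psi = 0.
    by rewrite -(hom_nat Hg r (Pbar_E n)) HE (hom0 Hg) ffunE.
  rewrite -H0 ffunE (big_pred1 psi) // => psi''.
  apply/eqP/eqP => [H|->]; apply/ffunP => k.
    move/ffunP: H => /(_ k); rewrite ffunE /r; case: ifP => // _ Hk.
    by move: (Hpsi k); rewrite -Hk eqxx.
  by rewrite ffunE /r (negbTE (Hj k)).
have Hlt : forall k, (psi k < n)%N.
  move=> k; have := Hpsi k; rewrite -val_eqE /= => Hne.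
  by rewrite ltn_neqAle Hne -ltnS ltn_ord.
pose phi : {ffun 'I_t -> 'I_n} := [ffun k => Ordinal (Hlt k)].
have -> : psi = iota phi by apply/ffunP => k; rewrite !ffunE; apply: val_inj.
apply: Hs; apply/forallP => j; move: Hall; rewrite negb_exists => /forallP /(_ j).
rewrite negb_forall => /existsP [k]; rewrite negbK => /eqP Hk.
by apply/existsP; exists k; rewrite ffunE; apply/eqP/val_inj; rewrite /= Hk.
Qed.

Lemma vanish m (v : PFA K n m) : Pbar_tens v -> gamma v = 0.
Proof.
move=> Hv; apply/ffunP => psi; rewrite [RHS]ffunE.
pose inc := @widen_ord m m.+1 (leqnSn m).
have inc_inj : injective inc by move=> x y /(congr1 val) /= H; apply: val_inj.
have -> : gamma v psi = Pmap inc (gamma v) [ffun k => inc (psi k)].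
  rewrite ffunE (big_pred1 psi) // => psi''.
  apply/eqP/eqP => [H|->] //; apply/ffunP => k.
  by move/ffunP: H => /(_ k); rewrite !ffunE; apply: inc_inj.
rewrite -(hom_nat Hg inc Hv).
have [N [c [U [HU ->]]]] := decomp Hv.
rewrite (hom_sum Hg); last by move=> j; apply: Pbar_sc; apply: Pbar_ptens.
rewrite sum_ffunE big1 // => j _.
rewrite (hom_sc Hg); last exact: Pbar_ptens.
rewrite (ptens_expand ord_max (HU j)) (hom_sum Hg); last first.
  by move=> x; apply: Pbar_sc; apply: Pbar_ptens => // i; apply: sum_delta_sub.
rewrite ffunE sum_ffunE big1 ?mulr0 // => x _.
rewrite (hom_sc Hg); last by apply: Pbar_ptens => // i; apply: sum_delta_sub.
rewrite -Pmap_fx (hom_nat Hg _ (Pbar_E n)) ffunE.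
rewrite ffunE; apply/eqP; rewrite mulf_eq0; apply/orP; right; apply/eqP; apply: big1 => psi'' /eqP H.
apply: vanish_W => k; apply/negP => /eqP Hk.
move/ffunP: H => /(_ k); rewrite !ffunE Hk fx_max => /(congr1 val) /= Hv'.
by move: (ltn_ord (psi k)); rewrite -Hv' ltnn.
Qed.

End Vanish.

End Work.

Theorem mainTheorem1 (K : fieldType) (n t : nat) :
  [/\ (* the restriction of each Yoneda map is a natural transformation *)
      (forall a : PFA K t n, is_hom (Yon a)),
      (* the restriction map kFA(t,n) -> hom(Pbar^{(x)n}, P_t) is surjective *)
      (forall alpha : forall m, PFA K n m -> PFA K t m,
          is_hom alpha -> exists a : PFA K t n, hom_eq alpha (Yon a)),
      (* ... and identifies with the projection kFA(t,n) -> kFS(t,n) *)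
      (forall a b : PFA K t n, hom_eq (Yon a) (Yon b) <-> projS a = projS b),
      (* naturality in t in FA^op *)
      (forall (s : nat) (h : 'I_s -> 'I_t) (a : PFA K t n),
          hom_eq (fun m v => Pre h (Yon a v)) (Yon (Pre h a)) /\
          projS (Pre h a) = FSact h (projS a)) &
      (* S_n-equivariance *)
      (forall (sigma : 'S_n) (a : PFA K t n),
          hom_eq (fun m v => Yon a (Pre sigma v)) (Yon (Pmap sigma a)) /\
          projS (Pmap sigma a) = Pmap sigma (projS a))].
Proof.
split.
- by move=> a; apply: is_hom_Yon.
- move=> alpha Ha.
  pose a : PFA K t n := projS [ffun phi => alpha _ (EE K n) (iota phi)].
  exists a => m v Hv; apply/eqP; rewrite -subr_eq0; apply/eqP.
  apply: (vanish (is_hom_sub Ha (is_hom_Yon a))) => // phi sp.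
  by rewrite subfE Yon_E_iota // !ffunE sp subrr.
- move=> a b; split.
    move=> H; apply/ffunP => phi; rewrite !ffunE; case: ifP => // sp.
    by rewrite -(Yon_E_iota a sp) -(Yon_E_iota b sp) H //; apply: Pbar_E.
  move=> H m v Hv; apply/eqP; rewrite -subr_eq0; apply/eqP.
  apply: (vanish (is_hom_sub (is_hom_Yon a) (is_hom_Yon b))) => // phi sp.
  rewrite subfE !Yon_E_iota //.
  by have := congr1 (fun f : PFA K t n => f phi) H; rewrite !ffunE sp => ->; rewrite subrr.
- by move=> s h a; split; [move=> m v _; apply: Pre_Yon | apply: projS_Pre].
- by move=> sigma a; split; [move=> m v _; apply: Yon_Pre | apply: projS_Pmap].
Qed.
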